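(* Let $n$ be even, $w\le n$, ${\mathbf{a}},{\mathbf{b}},{\mathbf{c}},{\mathbf{d}}\in\mathbb{F}_3^{n/2}$ with $a_id_i-b_ic_i=1$, $a_ic_i\neq0$ for all $i$, and $\varphi({\mathbf{x}},{\mathbf{y}})=({\mathbf{a}}\odot{\mathbf{x}}+{\mathbf{b}}\odot{\mathbf{y}},{\mathbf{c}}\odot{\mathbf{x}}+{\mathbf{d}}\odot{\mathbf{y}})$. Let $({\mathbf{e}}_U,{\mathbf{e}}_V)$ be a random pair in $\mathbb{F}_3^{n/2}\times\mathbb{F}_3^{n/2}$ (the output of a randomized decoding procedure with uniformly random syndromes) such that ${\mathbf{e}}=\varphi({\mathbf{e}}_U,{\mathbf{e}}_V)$ always has weight $w$, such that $\mathbb{P}({\mathbf{e}}_V={\mathbf{x}})$ depends only on $|{\mathbf{x}}|$ (''weightwise uniform''), and such that $\mathbb{P}({\mathbf{e}}_U={\mathbf{x}}_U\mid{\mathbf{e}}_V={\mathbf{x}}_V)$ depends only on the pair $(|{\mathbf{x}}_V|,m_1(\varphi({\mathbf{x}}_U,{\mathbf{x}}_V)))$ (''$m_1$-uniform''). Let $\widetilde{{\mathbf{e}}}$ be uniformly distributed over the vectors of $\mathbb{F}_3^n$ of weight $w$, and $(\widetilde{{\mathbf{e}}}_U,\widetilde{{\mathbf{e}}}_V)=\varphi^{-1}(\widetilde{{\mathbf{e}}})$. If $|{\mathbf{e}}_V|$ and $|\widetilde{{\mathbf{e}}}_V|$ have the same distribution and, for all possible $y,z$, $$\mathbb{P}(m_1({\mathbf{e}})=z\mid|{\mathbf{e}}_V|=y)=\mathbb{P}(m_1(\widetilde{{\mathbf{e}}})=z\mid|\widetilde{{\mathbf{e}}}_V|=y),$$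 then ${\mathbf{e}}$ and $\widetilde{{\mathbf{e}}}$ have the same distribution.
   Context: $|{\mathbf{x}}|$ is the Hamming weight. For ${\mathbf{x}}\in\mathbb{F}_3^n$, $m_1({\mathbf{x}})=|\{1\le i\le n/2: |(x_i,x_{i+n/2})|=1\}|$. $\varphi^{-1}({\mathbf{x}},{\mathbf{y}})=({\mathbf{d}}\odot{\mathbf{x}}-{\mathbf{b}}\odot{\mathbf{y}},-{\mathbf{c}}\odot{\mathbf{x}}+{\mathbf{a}}\odot{\mathbf{y}})$; vectors in $\mathbb{F}_3^n$ are identified with pairs of vectors in $\mathbb{F}_3^{n/2}$. *)

(* Defs.v *)
From HB Require Import structures.
From mathcomp Require Import all_boot all_order all_algebra.
Set Implicit Arguments. Unset Strict Implicit. Unset Printing Implicit Defensive.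
Import Order.TTheory GRing.Theory Num.Theory.
Local Open Scope ring_scope.

(* vectors of F_3^k; a vector of F_3^(2k) is identified with the pair (x,y)
   where x = first half and y = second half *)
Definition vec (k : nat) := 'rV['F_3]_k.
Definition pvec (k : nat) := (vec k * vec k)%type.

Definition wt k (x : vec k) : nat := #|[set i : 'I_k | x ord0 i != 0]|.
Definition pwt k (e : pvec k) : nat := (wt e.1 + wt e.2)%N.

Definition m1 k (e : pvec k) : nat :=
  #|[set i : 'I_k | addn (e.1 ord0 i != 0) (e.2 ord0 i != 0) == 1%N]|.

Definition hprod k (a x : vec k) : vec k := \row_i (a ord0 i * x ord0 i).

Definition phi k (a b c d : vec k) (e : pvec k) : pvec k :=
  (hprod a e.1 + hprod b e.2, hprod c e.1 + hprod d e.2).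
Definition phi_inv k (a b c d : vec k) (e : pvec k) : pvec k :=
  (hprod d e.1 - hprod b e.2, - hprod c e.1 + hprod a e.2).

Definition is_distr (R : numDomainType) (T : finType) (P : {ffun T -> R}) :=
  (forall t, 0 <= P t) /\ \sum_t P t = 1.

Definition prob (R : numDomainType) (T : finType) (P : {ffun T -> R})
  (A : pred T) : R := \sum_(t | A t) P t.

Definition cprob (R : numFieldType) (T : finType) (P : {ffun T -> R})
  (A B : pred T) : R := prob P [pred t | A t && B t] / prob P B.

Definition unif_wt (R : numFieldType) k (w : nat) : {ffun pvec k -> R} :=
  [ffun e => if pwt e == w then (#|[set e' : pvec k | pwt e' == w]|%:R)^-1 else 0].

Definition margV (R : numDomainType) k (P : {ffun pvec k -> R}) (x : vec k) : R :=
  prob P [pred p : pvec k | p.2 == x].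

Definition law_phi (R : numDomainType) k (a b c d : vec k) (P : {ffun pvec k -> R})
  (z : pvec k) : R := prob P [pred p | phi a b c d p == z].

(* Main.v *)
Require Import Defs.
From HB Require Import structures.
From mathcomp Require Import all_boot all_order all_algebra.
From mathcomp Require Import ring.
Import Order.TTheory GRing.Theory Num.Theory.
Local Open Scope ring_scope.

Lemma phi_invK k (a b c d : vec k) :
  (forall i, a ord0 i * d ord0 i - b ord0 i * c ord0 i = 1) ->
  forall p, phi_inv a b c d (phi a b c d p) = p.
Proof.
move=> H [x y]; rewrite /phi /phi_inv /=; congr pair; apply/rowP => i;
  rewrite !mxE; have Hi := H i.
- transitivity ((a ord0 i * d ord0 i - b ord0 i * c ord0 i) * x ord0 i); first ring.
  by rewrite Hi mul1r.
- transitivity ((a ord0 i * d ord0 i - b ord0 i * c ord0 i) * y ord0 i); first ring.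
  by rewrite Hi mul1r.
Qed.

Lemma phiK k (a b c d : vec k) :
  (forall i, a ord0 i * d ord0 i - b ord0 i * c ord0 i = 1) ->
  forall p, phi a b c d (phi_inv a b c d p) = p.
Proof.
move=> H [x y]; rewrite /phi /phi_inv /=; congr pair; apply/rowP => i;
  rewrite !mxE; have Hi := H i.
- transitivity ((a ord0 i * d ord0 i - b ord0 i * c ord0 i) * x ord0 i); first ring.
  by rewrite Hi mul1r.
- transitivity ((a ord0 i * d ord0 i - b ord0 i * c ord0 i) * y ord0 i); first ring.
  by rewrite Hi mul1r.
Qed.

Lemma sum_const_pred (R : numDomainType) (T : finType) (D : pred T) (x : R) :
  \sum_(i | D i) x = x *+ #|D|.
Proof. by rewrite sumr_const. Qed.

Theorem lemma1 (R : realFieldType) (k w : nat) (a b c d : vec k)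
  (P : {ffun pvec k -> R}) :
  (w <= 2 * k)%N ->
  (forall i, a ord0 i * d ord0 i - b ord0 i * c ord0 i = 1) ->
  (forall i, a ord0 i * c ord0 i != 0) ->
  is_distr P ->
  (* e = phi(e_U, e_V) always has weight w *)
  (forall p, 0 < P p -> pwt (phi a b c d p) = w) ->
  (* e_V is weightwise uniform *)
  (forall x x' : vec k, wt x = wt x' -> margV P x = margV P x') ->
  (* e_U given e_V is m1-uniform *)
  (forall xU xV xU' xV' : vec k, 0 < margV P xV -> 0 < margV P xV' ->
     wt xV = wt xV' ->
     m1 (phi a b c d (xU, xV)) = m1 (phi a b c d (xU', xV')) ->
     P (xU, xV) / margV P xV = P (xU', xV') / margV P xV') ->
  let Q := unif_wt R k w in
  (* |e_V| and |~e_V| have the same distribution *)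
  (forall y : nat, prob P [pred p : pvec k | wt p.2 == y]
     = prob Q [pred e : pvec k | wt (phi_inv a b c d e).2 == y]) ->
  (* same conditional law of m1 given |e_V| *)
  (forall y z : nat, 0 < prob P [pred p : pvec k | wt p.2 == y] ->
     cprob P [pred p : pvec k | m1 (phi a b c d p) == z] [pred p : pvec k | wt p.2 == y]
     = cprob Q [pred e : pvec k | m1 e == z]
               [pred e : pvec k | wt (phi_inv a b c d e).2 == y]) ->
  (* conclusion: e and ~e have the same distribution *)
  forall e : pvec k, law_phi a b c d P e = Q e.
Proof.
move=> hw Hdet Hac [P0 P1] Hwt HV HU Q Hy Hz e.
set p0 := phi_inv a b c d e.
have He : phi a b c d p0 = e by apply: phiK.
have Hlaw : law_phi a b c d P e = P p0.
  rewrite /law_phi /prob (big_pred1 p0) // => p /=.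
  by apply/eqP/eqP => H; [rewrite /p0 -H phi_invK | rewrite H].
rewrite Hlaw.
set y := wt p0.2; set z := m1 e.
have Qge0 : forall e, 0 <= Q e.
  by move=> e'; rewrite /Q /unif_wt ffunE; case: ifP => // _; rewrite invr_ge0 ler0n.
set s := prob P [pred p : pvec k | wt p.2 == y].
have s_ge0 : 0 <= s by apply: sumr_ge0.
have [s0|sn0] := eqVneq s 0.
  have -> : P p0 = 0.
    by apply: (psumr_eq0P _ s0) => //= *; rewrite eqxx.
  move: s0; rewrite /s Hy => s0; symmetry.
  by apply: (psumr_eq0P _ s0) => //= *.
have spos : 0 < s by rewrite lt_def sn0.
have [p1 /andP[Hp1y Hp1]] : exists p1, (wt p1.2 == y) && (0 < P p1).
  have : ~~ [forall p, ~~ ((wt p.2 == y) && (0 < P p))].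
    apply/negP => /forallP H.
    move/eqP: sn0; apply; apply: big1 => p Hp; have := H p.
    by move: Hp => /= ->; rewrite /= lt_def P0 andbT negbK => /eqP.
  by rewrite negb_forall => /existsP [p1 /negPn Hp1]; exists p1.
have Hmarg : forall x, wt x = y -> 0 < margV P x.
  move=> x Hx; rewrite (HV x p1.2); last by rewrite Hx (eqP Hp1y).
  apply: lt_le_trans Hp1 _; rewrite /margV /prob (bigD1 p1) //=.
  by rewrite lerDl sumr_ge0.
have Hconst : forall p, wt p.2 = y -> m1 (phi a b c d p) = z -> P p = P p0.
  move=> [xU xV] /= Hxy Hm.
  have := HU xU xV p0.1 p0.2 (Hmarg _ Hxy) (Hmarg _ erefl) Hxy.
  rewrite -surjective_pairing He Hm => /(_ erefl).
  rewrite (HV xV p0.2 Hxy) => /(congr1 (fun t => t * margV P p0.2)).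
  have mn0 : margV P p0.2 != 0 by rewrite gt_eqF // Hmarg.
  by rewrite !divfK.
have Hnum : prob P [pred p : pvec k | (m1 (phi a b c d p) == z) && (wt p.2 == y)]
   = prob Q [pred e : pvec k | (m1 e == z) && (wt (phi_inv a b c d e).2 == y)].
  have := Hz y z spos; rewrite /cprob -(Hy y) => /(congr1 (fun t => t * s)).
  by rewrite !divfK.
have bij : bijective (phi a b c d).
  by exists (phi_inv a b c d) => ?; [apply: phi_invK | apply: phiK].
move: Hnum; rewrite /prob [X in _ = X -> _](reindex (phi a b c d)); last exact: onW_bij.
rewrite [X in _ = X -> _](eq_bigl (fun p => (m1 (phi a b c d p) == z) && (wt p.2 == y))); last first.
  move=> p; change ((m1 (phi a b c d p) == z) && (wt (phi_inv a b c d (phi a b c d p)).2 == y) = (m1 (phi a b c d p) == z) && (wt p.2 == y)).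
  by rewrite phi_invK.
have Hp0D : (m1 (phi a b c d p0) == z) && (wt p0.2 == y) by rewrite He eqxx eqxx.
have [a0|an0] := eqVneq (P p0) 0.
  rewrite a0 => Hnum.
  have Hs0 : \sum_(p | (m1 (phi a b c d p) == z) && (wt p.2 == y)) P p = 0.
    by apply: big1 => p /andP[/eqP H1 /eqP H2]; rewrite Hconst // a0.
  rewrite Hs0 in Hnum; symmetry in Hnum.
  rewrite -He; symmetry.
  by apply: (psumr_eq0P _ Hnum) => //= *.
have apos : 0 < P p0 by rewrite lt_def an0 P0.
have HP : forall p, (m1 (phi a b c d p) == z) && (wt p.2 == y) -> P p = P p0.
  by move=> p /andP[/eqP H1 /eqP H2]; rewrite Hconst.
have Hwe : pwt e = w by rewrite -He; apply: Hwt.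
have HQ : forall p, (m1 (phi a b c d p) == z) && (wt p.2 == y) -> Q (phi a b c d p) = Q e.
  move=> p Hp; have Hpos : 0 < P p by rewrite HP.
  by rewrite /Q /unif_wt !ffunE (Hwt p Hpos) Hwe eqxx.
move=> Hnum.
rewrite (eq_bigr _ HP) in Hnum.
rewrite (eq_bigr _ HQ) in Hnum.
rewrite !sum_const_pred in Hnum.
move: Hnum; rewrite -(mulr_natr (P p0)) -(mulr_natr (Q e)); apply: mulIf.
rewrite pnatr_eq0 -lt0n; apply/card_gt0P; exists p0; exact: Hp0D.
Qed.
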